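(* Let $a,b>0$, $M\ge 1$ and consider solutions $\mathbf u(t)=(u_x(t))_{x\in\mathbb Z}$ of the mean-field equations with initial values in $[0,1]^{\mathbb Z}$. (i) If expansion occurs, then there are $u,L,x_0,\delta,c>0$ with $u_-<u<u_+$ such that: whenever $u_x(0)\ge u$ for all $|x|\le L$, we have $u_x(t)\ge u+\delta$ for all $t>0$ and all $x$ with $|x|\le ct-x_0$. (ii) If retreat occurs, then there are $u,L,x_0,\delta,c>0$ with $0<u<u_-$ (when $a+b<4$, the requirement $u<u_-$ is dropped) such that: whenever $u_x(0)\le u$ for all $|x|\le L$, we have $u_x(t)\le u-\delta$ for all $t>0$ and all $x$ with $|x|\le ct-x_0$.
   Context: Fix parameters $a,b>0$ and an integer $M\ge 1$ (dispersal range). For $x,y\in\mathbb Z$ write $y\sim x$ iff $0<|x-y|\le M$. The mean-field equations are the system $$u_x'=\Big(a u_x^2+\frac{b}{2M}\sum_{y\sim x}u_y^2\Big)(1-u_x)-u_x,\qquad x\in\mathbb Z,$$ for $\mathbf u(t)=(u_x(t))_{x\in\mathbb Z}$; for every initial value in $[0,1]^{\mathbb Z}$ it has a unique global solution, which stays in $[0,1]^{\mathbb Z}$. Let $r=a+b$. When $r>4$ put $w=(1/4-1/r)^{1/2}$, $u_-=1/2-w$, $u_+=1/2+w$ (the nonzero zeros of $ru^2(1-u)-u$); when $r=4$ put $u_-=u_+=1/2$. Expansion (defined for $r>4$): there is $u$ with $u_-<u<u_+$ such that the solution with $u_x(0)=u\,\mathbf 1(x\le 0)$ satisfies $u_1(t_0)=u$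 for some $t_0>0$. Retreat (for $r\ge4$): there are $u_*,u^*$ with $0<u_*<u_-\le u_+<u^*\le 1$ such that the solution with $u_x(0)=u^*\mathbf 1(x<0)+u_*\mathbf 1(x\ge 0)$ satisfies $u_{-1}(t_0)=u_*$ for some $t_0>0$. By convention, retreat is also said to occur whenever $r<4$. *)

(* Defs.v *)
From Stdlib Require Import Reals Lra ZArith List.
Open Scope R_scope.

Definition nbr_sq_sum (M : nat) (f : Z -> R) (x : Z) : R :=
  fold_right (fun k acc =>
      f (x + Z.of_nat k)%Z ^ 2 + f (x - Z.of_nat k)%Z ^ 2 + acc)
    0 (seq 1 M).

Definition mf_rhs (a b : R) (M : nat) (f : Z -> R) (x : Z) : R :=
  (a * f x ^ 2 + b / (2 * INR M) * nbr_sq_sum M f x) * (1 - f x) - f x.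

Definition mf_solution (a b : R) (M : nat) (u : R -> Z -> R) : Prop :=
  (forall t x, 0 <= t -> 0 <= u t x <= 1) /\
  (forall x, forall eps, 0 < eps -> exists d, 0 < d /\
       forall t, 0 <= t < d -> Rabs (u t x - u 0 x) < eps) /\
  (forall t x, 0 < t -> derivable_pt_lim (fun s => u s x) t (mf_rhs a b M (u t) x)).

Definition u_minus (a b : R) : R := / 2 - sqrt (/ 4 - / (a + b)).
Definition u_plus (a b : R) : R := / 2 + sqrt (/ 4 - / (a + b)).

Definition expansion (a b : R) (M : nat) : Prop :=
  4 < a + b /\
  exists u, u_minus a b < u < u_plus a b /\
    exists v, mf_solution a b M v /\
      (forall x, v 0 x = if Z.leb x 0 then u else 0) /\
      exists t0, 0 < t0 /\ v t0 1%Z = u.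

Definition retreat (a b : R) (M : nat) : Prop :=
  a + b < 4 \/
  (4 <= a + b /\
   exists ulow uhigh,
     0 < ulow < u_minus a b /\ u_minus a b <= u_plus a b /\
     u_plus a b < uhigh <= 1 /\
     exists v, mf_solution a b M v /\
       (forall x, v 0 x = if Z.ltb x 0 then uhigh else ulow) /\
       exists t0, 0 < t0 /\ v t0 (-1)%Z = ulow).

(* Main.v *)
Require Import Defs.
From Stdlib Require Import Reals ZArith.
From Stdlib Require Import Lra Lia List Classical FunctionalExtensionality.
Open Scope R_scope.


Definition rc (g : R -> R) (s : R) : Prop :=
  forall eps, 0 < eps -> exists d, 0 < d /\ forall t, s <= t < s + d -> Rabs (g t - g s) < eps.

Lemma dpl_cont_eps (g : R -> R) q l : derivable_pt_lim g q l ->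
  forall eps, 0 < eps -> exists d, 0 < d /\ forall t, Rabs (t - q) < d -> Rabs (g t - g q) < eps.
Proof.
  intros H eps Heps.
  assert (C : continuity_pt g q) by (apply derivable_continuous_pt; exists l; exact H).
  destruct (C eps Heps) as [alp [Ha Hx]].
  exists alp; split; [exact Ha|].
  intros t Ht. destruct (Req_dec t q) as [->|Hne].
  - rewrite Rminus_diag, Rabs_R0; exact Heps.
  - apply (Hx t); split; [split; [exact I| congruence] | exact Ht].
Qed.

Lemma dpl_rc g q l : derivable_pt_lim g q l -> rc g q.
Proof.
  intros H eps He. destruct (dpl_cont_eps g q l H eps He) as [d [Hd Hx]].
  exists d; split; auto. intros t Ht. apply Hx. rewrite Rabs_right; lra.
Qed.

Lemma PSL (g G : R -> R) s t e0 K :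
  s <= t -> 0 <= K -> rc g s -> g s <= e0 ->
  (forall q, s < q <= t -> derivable_pt_lim g q (G q)) ->
  (forall q, s < q <= t -> e0 < g q -> G q <= K) ->
  g t <= e0 + K * (t - s).
Proof.
  intros Hst HK Hrc Hs Hd HG.
  destruct (Rle_or_lt (g t) (e0 + K * (t - s))) as [Hok|Hbad]; [exact Hok|exfalso].
  set (A := fun x => s <= x <= t /\ g x <= e0).
  assert (Hb : bound A) by (exists t; intros x [Hx _]; lra).
  assert (Hne : exists x, A x) by (exists s; split; [lra|exact Hs]).
  destruct (completeness A Hb Hne) as [s0 [Hub Hlub]].
  assert (Hs0a : s <= s0) by (apply Hub; split; [lra|exact Hs]).
  assert (Hs0b : s0 <= t) by (apply Hlub; intros x [Hx _]; lra).
  assert (Hg0 : g s0 <= e0).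
  { destruct (Rle_or_lt (g s0) e0) as [H|H]; [exact H|exfalso].
    destruct (Req_dec s0 s) as [E|E]; [rewrite E in H; lra|].
    assert (Hsq : s < s0 <= t) by lra.
    destruct (dpl_cont_eps g s0 (G s0) (Hd s0 Hsq) (g s0 - e0)) as [d [Hdp Hx]]; [lra|].
    assert (s0 <= s0 - d/2); [|lra].
    apply Hlub. intros x [Hx1 Hx2].
    destruct (Rle_or_lt x (s0 - d/2)) as [H1|H1]; [exact H1|exfalso].
    assert (x <= s0) by (apply Hub; split; assumption).
    assert (Rabs (g x - g s0) < g s0 - e0) by (apply Hx; rewrite Rabs_left1; lra).
    apply Rabs_def2 in H2. lra. }
  assert (Hs0t : s0 < t).
  { destruct (Req_dec s0 t) as [E|E]; [|lra]. subst s0.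
    assert (0 <= K * (t - s)) by (apply Rmult_le_pos; lra). lra. }
  assert (Hpos : forall x, s0 < x <= t -> e0 < g x).
  { intros x Hx. destruct (Rle_or_lt (g x) e0) as [H|H]; [|exact H].
    assert (x <= s0) by (apply Hub; split; [lra|exact H]). lra. }
  set (eps0 := g t - e0 - K * (t - s)).
  assert (Heps0 : 0 < eps0) by (unfold eps0; lra).
  assert (Hrc0 : rc g s0).
  { destruct (Req_dec s0 s) as [E|E]; [rewrite E; exact Hrc|].
    apply (dpl_rc g s0 (G s0)). apply Hd. lra. }
  destruct (Hrc0 eps0 Heps0) as [d [Hdp Hx]].
  set (s1 := s0 + Rmin d (t - s0) / 2).
  assert (Hm1 : 0 < Rmin d (t - s0)) by (apply Rmin_glb_lt; lra).
  assert (Hm2 : Rmin d (t - s0) <= d) by apply Rmin_l.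
  assert (Hm3 : Rmin d (t - s0) <= t - s0) by apply Rmin_r.
  assert (Hs1 : s0 < s1 < t) by (unfold s1; lra).
  assert (Hgs1 : Rabs (g s1 - g s0) < eps0) by (apply Hx; unfold s1; lra).
  apply Rabs_def2 in Hgs1.
  destruct (MVT_cor2 g G s1 t) as [c [Hc1 Hc2]]; [lra| |].
  { intros c Hc. apply Hd. lra. }
  assert (HGc : G c <= K) by (apply HG; [lra| apply Hpos; lra]).
  assert (G c * (t - s1) <= K * (t - s)).
  { apply Rle_trans with (K * (t - s1)).
    - apply Rmult_le_compat_r; lra.
    - apply Rmult_le_compat_l; lra. }
  unfold eps0 in *. lra.
Qed.


Lemma sq_diff_le (f h m : R) : 0 <= f <= 1 -> 0 <= h <= 1 -> 0 <= m -> f - h <= m ->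
  f ^ 2 - h ^ 2 <= 2 * m.
Proof. intros. nra. Qed.

Lemma fold_nonneg (f : Z -> R) x l :
  0 <= fold_right (fun k acc => f (x + Z.of_nat k)%Z ^ 2 + f (x - Z.of_nat k)%Z ^ 2 + acc) 0 l.
Proof. induction l as [|k l IH]; cbn [fold_right]; [lra|].
  pose proof (pow2_ge_0 (f (x + Z.of_nat k)%Z)); pose proof (pow2_ge_0 (f (x - Z.of_nat k)%Z)). lra. Qed.

Lemma nbr_nonneg M f x : 0 <= nbr_sq_sum M f x.
Proof. apply fold_nonneg. Qed.

Lemma fold_diff (f h : Z -> R) x m l :
  (forall y, 0 <= f y <= 1) -> (forall y, 0 <= h y <= 1) -> 0 <= m ->
  (forall k, In k l -> f (x + Z.of_nat k)%Z - h (x + Z.of_nat k)%Z <= m /\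
                       f (x - Z.of_nat k)%Z - h (x - Z.of_nat k)%Z <= m) ->
  fold_right (fun k acc => f (x + Z.of_nat k)%Z ^ 2 + f (x - Z.of_nat k)%Z ^ 2 + acc) 0 l
  - fold_right (fun k acc => h (x + Z.of_nat k)%Z ^ 2 + h (x - Z.of_nat k)%Z ^ 2 + acc) 0 l
  <= INR (length l) * (4 * m).
Proof.
  intros Hf Hh Hm. induction l as [|k l IH]; intros Hl; cbn [fold_right length].
  - simpl; lra.
  - destruct (Hl k (or_introl eq_refl)) as [H1 H2].
    assert (IH' := IH (fun j Hj => Hl j (or_intror Hj))).
    pose proof (sq_diff_le _ _ _ (Hf (x + Z.of_nat k)%Z) (Hh (x + Z.of_nat k)%Z) Hm H1).
    pose proof (sq_diff_le _ _ _ (Hf (x - Z.of_nat k)%Z) (Hh (x - Z.of_nat k)%Z) Hm H2).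
    rewrite S_INR. lra.
Qed.

Lemma nbr_const M c x : nbr_sq_sum M (fun _ => c) x = 2 * INR M * c ^ 2.
Proof.
  unfold nbr_sq_sum. rewrite <- (length_seq M 1) at 2.
  induction (seq 1 M); cbn [fold_right length]; [simpl; lra|]. rewrite IHl, S_INR. lra.
Qed.

Lemma key_ineq a b M f h x m : 0 < a -> 0 < b -> (1 <= M)%nat -> 0 <= m ->
  (forall y, 0 <= f y <= 1) -> (forall y, 0 <= h y <= 1) ->
  (forall y, (Z.abs (y - x) <= Z.of_nat M)%Z -> f y - h y <= m) -> 0 < f x - h x ->
  mf_rhs a b M f x - mf_rhs a b M h x <= 2 * (a + b) * m.
Proof.
  intros Ha Hb HM Hm Hf Hh Hnb Hx.
  assert (HMp : 0 < INR M) by (apply lt_0_INR; lia).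
  assert (Hd : nbr_sq_sum M f x - nbr_sq_sum M h x <= INR M * (4 * m)).
  { unfold nbr_sq_sum. rewrite <- (length_seq M 1) at 3.
    apply fold_diff; auto. intros k Hk. apply in_seq in Hk.
    split; apply Hnb; lia. }
  pose proof (nbr_nonneg M h x) as Hn.
  assert (Hxx : f x - h x <= m) by (apply Hnb; lia).
  pose proof (sq_diff_le _ _ _ (Hf x) (Hh x) Hm Hxx) as Hsq.
  set (beta := b / (2 * INR M)).
  assert (Hbeta : 0 < beta) by (unfold beta; apply Rdiv_lt_0_compat; lra).
  assert (Hbm : beta * (INR M * (4 * m)) = 2 * b * m) by (unfold beta; field; lra).
  set (Pf := a * f x ^ 2 + beta * nbr_sq_sum M f x).
  set (Ph := a * h x ^ 2 + beta * nbr_sq_sum M h x).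
  assert (HPh : 0 <= Ph) by (unfold Ph; pose proof (Hh x); nra).
  assert (HPd : Pf - Ph <= 2 * (a + b) * m).
  { unfold Pf, Ph.
    assert (beta * (nbr_sq_sum M f x - nbr_sq_sum M h x) <= beta * (INR M * (4 * m)))
      by (apply Rmult_le_compat_l; lra).
    nra. }
  unfold mf_rhs. fold beta. fold Pf Ph.
  pose proof (Hf x). pose proof (Hh x).
  assert (E : (Pf * (1 - f x) - f x) - (Ph * (1 - h x) - h x)
              = (Pf - Ph) * (1 - f x) - (Ph + 1) * (f x - h x)) by ring.
  rewrite E.
  assert (0 <= (Ph + 1) * (f x - h x)) by nra.
  assert ((Pf - Ph) * (1 - f x) <= 2 * (a + b) * m).
  { destruct (Rle_or_lt (Pf - Ph) 0) as [Hq|Hq].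
    - assert ((Pf - Ph) * (1 - f x) <= 0) by nra. nra.
    - nra. }
  lra.
Qed.


Definition depth (G : Z -> Prop) (M n : nat) (y : Z) : Prop :=
  forall z, (Z.abs (z - y) <= Z.of_nat (n * M))%Z -> G z.

Definition subOn a b M (w : R -> Z -> R) s S : Prop :=
  (forall t y, s <= t <= s + S -> 0 <= w t y <= 1) /\
  (forall y, rc (fun q => w q y) s) /\
  exists dw : R -> Z -> R, forall t y, s < t <= s + S ->
     derivable_pt_lim (fun q => w q y) t (dw t y) /\ dw t y <= mf_rhs a b M (w t) y.

Definition supOn a b M (w : R -> Z -> R) s S : Prop :=
  (forall t y, s <= t <= s + S -> 0 <= w t y <= 1) /\
  (forall y, rc (fun q => w q y) s) /\
  exists dw : R -> Z -> R, forall t y, s < t <= s + S ->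
     derivable_pt_lim (fun q => w q y) t (dw t y) /\ mf_rhs a b M (w t) y <= dw t y.

Lemma rc_minus f g s : rc f s -> rc g s -> rc (fun q => f q - g q) s.
Proof.
  intros Hf Hg eps He.
  destruct (Hf (eps/2)) as [d1 [Hd1 H1]]; [lra|].
  destruct (Hg (eps/2)) as [d2 [Hd2 H2]]; [lra|].
  exists (Rmin d1 d2); split; [apply Rmin_glb_lt; auto|].
  intros t Ht. pose proof (Rmin_l d1 d2); pose proof (Rmin_r d1 d2).
  assert (A1 : Rabs (f t - f s) < eps/2) by (apply H1; lra).
  assert (A2 : Rabs (g t - g s) < eps/2) by (apply H2; lra).
  apply Rabs_def2 in A1; apply Rabs_def2 in A2. apply Rabs_def1; lra.
Qed.

Lemma depth_nb G M n y z : depth G M (S n) y -> (Z.abs (z - y) <= Z.of_nat M)%Z -> depth G M n z.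
Proof.
  unfold depth. intros H Hz z' Hz'. apply H.
  rewrite Nat.mul_succ_l, Nat2Z.inj_add. lia.
Qed.

Lemma depth_self G M n y : depth G M n y -> G y.
Proof. intros H. apply H. rewrite Z.sub_diag. simpl. lia. Qed.

Lemma CCL1 a b M w v s T G e : 0 < a -> 0 < b -> (1 <= M)%nat -> 0 <= T -> 4 * (a + b) * T <= 1 ->
  subOn a b M w s T -> supOn a b M v s T -> 0 <= e ->
  (forall y, G y -> w s y - v s y <= e) ->
  forall n y, depth G M n y -> forall t, s <= t <= s + T -> w t y - v t y <= 2 * e + (/2) ^ n.
Proof.
  intros Ha Hb HM HT HT4 [Bw [Rw [dw Dw]]] [Bv [Rv [dv Dv]]] He HG n.
  induction n as [|n IH]; intros y Hy t Ht.
  - simpl. pose proof (Bw t y Ht); pose proof (Bv t y Ht). lra.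
  - set (m := 2 * e + (/2) ^ n).
    assert (Hm : 0 <= m) by (unfold m; pose proof (pow_le (/2) n); lra).
    assert (Gy : G y) by (apply (depth_self G M (S n)); exact Hy).
    assert (Hps := PSL (fun q => w q y - v q y) (fun q => dw q y - dv q y) s t e (2 * (a + b) * m)).
    assert (Hres : w t y - v t y <= e + 2 * (a + b) * m * (t - s)).
    { apply Hps.
      - lra.
      - nra.
      - apply rc_minus; auto.
      - apply HG; exact Gy.
      - intros q Hq. apply derivable_pt_lim_minus; [apply (Dw q y)|apply (Dv q y)]; lra.
      - intros q Hq Hgt.
        destruct (Dw q y) as [_ Hw]; [lra|]. destruct (Dv q y) as [_ Hv]; [lra|].
        assert (mf_rhs a b M (w q) y - mf_rhs a b M (v q) y <= 2 * (a + b) * m).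
        { apply key_ineq; auto.
          - intros z; apply Bw; lra.
          - intros z; apply Bv; lra.
          - intros z Hz. apply IH; [apply (depth_nb G M n y z Hy Hz)|lra].
          - lra. }
        lra. }
    assert (2 * (a + b) * m * (t - s) <= m / 2).
    { assert (0 <= t - s <= T) by lra.
      assert (2 * (a + b) * m * (t - s) <= 2 * (a + b) * m * T).
      { apply Rmult_le_compat_l; [nra|lra]. }
      nra. }
    simpl. unfold m in *. lra.
Qed.


Lemma subOn_restr a b M w s S s' S' : subOn a b M w s S -> s <= s' -> 0 <= S' -> s' + S' <= s + S ->
  subOn a b M w s' S'.
Proof.
  intros [B [Rc [d D]]] H1 H2 H3. split; [|split].
  - intros t y Ht. apply B. lra.
  - intros y. destruct (Req_dec s' s) as [->|E]; [apply Rc|].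
    apply (dpl_rc _ _ (d s' y)). apply D. lra.
  - exists d. intros t y Ht. apply D. lra.
Qed.

Lemma supOn_restr a b M w s S s' S' : supOn a b M w s S -> s <= s' -> 0 <= S' -> s' + S' <= s + S ->
  supOn a b M w s' S'.
Proof.
  intros [B [Rc [d D]]] H1 H2 H3. split; [|split].
  - intros t y Ht. apply B. lra.
  - intros y. destruct (Req_dec s' s) as [->|E]; [apply Rc|].
    apply (dpl_rc _ _ (d s' y)). apply D. lra.
  - exists d. intros t y Ht. apply D. lra.
Qed.

Lemma depth_mono G M n n' y : (n <= n')%nat -> depth G M n' y -> depth G M n y.
Proof.
  unfold depth. intros Hn H z Hz. apply H.
  assert (Z.of_nat (n * M) <= Z.of_nat (n' * M))%Z by (apply Nat2Z.inj_le, Nat.mul_le_mono_r; exact Hn).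
  lia.
Qed.

Lemma depth_comp G M n k y : depth G M (n + k) y -> depth (depth G M k) M n y.
Proof.
  unfold depth. intros H z Hz z' Hz'. apply H.
  rewrite Nat.mul_add_distr_r, Nat2Z.inj_add. lia.
Qed.

Lemma pow2_ge1 k : 1 <= 2 ^ k.
Proof. induction k; simpl; lra. Qed.

Lemma CCLk a b M w v s T G e k : 0 < a -> 0 < b -> (1 <= M)%nat -> 0 <= T -> 4 * (a + b) * T <= 1 ->
  subOn a b M w s (INR k * T) -> supOn a b M v s (INR k * T) -> 0 <= e ->
  (forall y, G y -> w s y - v s y <= e) ->
  forall n y, depth G M (k * n) y -> forall t, s <= t <= s + INR k * T ->
    w t y - v t y <= 2 ^ k * (e + (/2) ^ n) - (/2) ^ n.
Proof.
  intros Ha Hb HM HT HT4 Hw Hv He HG n.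
  pose proof (pow_le (/2) n) as Hnu. assert (Hnu0 : 0 < /2) by lra.
  induction k as [|k IH]; intros y Hy t Ht.
  - simpl in Ht |- *. replace t with s by lra. apply Rle_trans with e; [|lra].
    apply HG. apply (depth_self G M 0). exact Hy.
  - rewrite S_INR in Hw, Hv, Ht.
    assert (HkT : 0 <= INR k * T) by (apply Rmult_le_pos; [apply pos_INR|lra]).
    assert (Hw' : subOn a b M w s (INR k * T)) by (eapply subOn_restr; [exact Hw|lra|lra|lra]).
    assert (Hv' : supOn a b M v s (INR k * T)) by (eapply supOn_restr; [exact Hv|lra|lra|lra]).
    specialize (IH Hw' Hv').
    pose proof (pow2_ge1 k) as H2k.
    destruct (Rle_or_lt t (s + INR k * T)) as [Hle|Hgt].
    + apply Rle_trans with (2 ^ k * (e + (/2) ^ n) - (/2) ^ n).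
      * apply IH; [|lra]. apply (depth_mono _ _ _ (S k * n)); [nia|exact Hy].
      * simpl. nra.
    + set (s' := s + INR k * T).
      assert (Hw2 : subOn a b M w s' T) by (eapply subOn_restr; [exact Hw|unfold s'; lra|lra|unfold s'; lra]).
      assert (Hv2 : supOn a b M v s' T) by (eapply supOn_restr; [exact Hv|unfold s'; lra|lra|unfold s'; lra]).
      assert (Hc := CCL1 a b M w v s' T (depth G M (k * n)) (2 ^ k * (e + (/2) ^ n) - (/2) ^ n)
                    Ha Hb HM HT HT4 Hw2 Hv2).
      assert (Hr : w t y - v t y <= 2 * (2 ^ k * (e + (/2) ^ n) - (/2) ^ n) + (/2) ^ n).
      { apply Hc.
        - nra.
        - intros z Hz. apply IH; [exact Hz|unfold s'; lra].
        - apply depth_comp. replace (n + k * n)%nat with (S k * n)%nat by lia. exact Hy.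
        - unfold s'; lra. }
      simpl. lra.
Qed.


Definition shiftf (v : R -> Z -> R) (s0 : R) (c : Z) : R -> Z -> R := fun t x => v (t - s0) (x - c)%Z.
Definition reflf (v : R -> Z -> R) : R -> Z -> R := fun t x => v t (- x)%Z.

Lemma nbr_shift M f c y : nbr_sq_sum M (fun x => f (x - c)%Z) y = nbr_sq_sum M f (y - c)%Z.
Proof.
  unfold nbr_sq_sum. induction (seq 1 M) as [|k l IH]; cbn [fold_right]; [reflexivity|].
  rewrite IH. replace (y + Z.of_nat k - c)%Z with (y - c + Z.of_nat k)%Z by ring.
  replace (y - Z.of_nat k - c)%Z with (y - c - Z.of_nat k)%Z by ring. reflexivity.
Qed.

Lemma rhs_shift a b M f c y : mf_rhs a b M (fun x => f (x - c)%Z) y = mf_rhs a b M f (y - c)%Z.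
Proof. unfold mf_rhs. rewrite nbr_shift. reflexivity. Qed.

Lemma nbr_refl M f y : nbr_sq_sum M (fun x => f (- x)%Z) y = nbr_sq_sum M f (- y)%Z.
Proof.
  unfold nbr_sq_sum. induction (seq 1 M) as [|k l IH]; cbn [fold_right]; [reflexivity|].
  rewrite IH. replace (- (y + Z.of_nat k))%Z with (- y - Z.of_nat k)%Z by ring.
  replace (- (y - Z.of_nat k))%Z with (- y + Z.of_nat k)%Z by ring. ring.
Qed.

Lemma rhs_refl a b M f y : mf_rhs a b M (fun x => f (- x)%Z) y = mf_rhs a b M f (- y)%Z.
Proof. unfold mf_rhs. rewrite nbr_refl. reflexivity. Qed.

Lemma dpl_shift f t s0 l : derivable_pt_lim f (t - s0) l -> derivable_pt_lim (fun q => f (q - s0)) t l.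
Proof.
  intros H eps He. destruct (H eps He) as [d Hd]. exists d. intros h Hh Hhd.
  replace (t + h - s0) with (t - s0 + h) by ring. apply Hd; auto.
Qed.

Lemma refl_sol a b M v : mf_solution a b M v -> mf_solution a b M (reflf v).
Proof.
  intros [B [Rc D]]. unfold reflf. split; [|split].
  - intros t x Ht. apply B; auto.
  - intros x. apply Rc.
  - intros t x Ht. rewrite (rhs_refl a b M (v t) x). apply (D t (- x)%Z Ht).
Qed.

Lemma sol_shift_on a b M v s0 c s S : mf_solution a b M v -> s0 <= s -> 0 <= S ->
  subOn a b M (shiftf v s0 c) s S /\ supOn a b M (shiftf v s0 c) s S.
Proof.
  intros [B [Rc D]] Hs HS.
  assert (HB : forall t y, s <= t <= s + S -> 0 <= shiftf v s0 c t y <= 1)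
    by (intros t y Ht; unfold shiftf; apply B; lra).
  assert (HD : forall t y, s < t <= s + S ->
     derivable_pt_lim (fun q => shiftf v s0 c q y) t (mf_rhs a b M (shiftf v s0 c t) y)).
  { intros t y Ht. unfold shiftf. rewrite (rhs_shift a b M (v (t - s0)) c y).
    apply (dpl_shift (fun q => v q (y - c)%Z)). apply D. lra. }
  assert (HR : forall y, rc (fun q => shiftf v s0 c q y) s).
  { intros y. destruct (Req_dec s s0) as [E|E].
    - subst s0. intros eps He. destruct (Rc (y - c)%Z eps He) as [d [Hd Hx]].
      exists d; split; auto. intros t Ht. unfold shiftf. rewrite Rminus_diag. apply Hx. lra.
    - intros eps He. assert (Hs' : s0 <= s) by lra.
      destruct (dpl_rc _ _ _ (D (s - s0) (y - c)%Z ltac:(lra)) eps He) as [d [Hd Hx]].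
      exists d; split; auto. intros t Ht. unfold shiftf. apply Hx. lra. }
  split; (split; [exact HB|split; [exact HR|]]);
    exists (fun t y => mf_rhs a b M (shiftf v s0 c t) y); intros t y Ht; split;
    try (apply HD; lra); lra.
Qed.

Lemma shiftf_00 v : shiftf v 0 0 = v.
Proof.
  apply functional_extensionality; intro t; apply functional_extensionality; intro x.
  unfold shiftf. rewrite Rminus_0_r, Z.sub_0_r. reflexivity.
Qed.

Lemma sol_on a b M v s S : mf_solution a b M v -> 0 <= s -> 0 <= S ->
  subOn a b M v s S /\ supOn a b M v s S.
Proof. intros H Hs HS. rewrite <- (shiftf_00 v). apply sol_shift_on; auto. Qed.

Definition gfun (r y : R) : R := r * y ^ 2 * (1 - y) - y.

Lemma rhs_const a b M c y : (1 <= M)%nat -> mf_rhs a b M (fun _ => c) y = gfun (a + b) c.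
Proof.
  intros HM. unfold mf_rhs, gfun. rewrite nbr_const.
  assert (0 < INR M) by (apply lt_0_INR; lia). field. lra.
Qed.

Definition lin (l sg s : R) : R -> Z -> R := fun t _ => l + sg * (t - s).

Lemma dpl_lin l sg s t : derivable_pt_lim (fun q => l + sg * (q - s)) t sg.
Proof.
  intros eps He. exists (mkposreal 1 ltac:(lra)). intros h Hh _.
  replace ((l + sg * (t + h - s) - (l + sg * (t - s))) / h - sg) with 0 by (field; exact Hh).
  rewrite Rabs_R0. exact He.
Qed.

Lemma rc_lin l sg s s' : rc (fun q => l + sg * (q - s)) s'.
Proof.
  intros eps He. exists (eps / (Rabs sg + 1)). split.
  - apply Rdiv_lt_0_compat; [lra|]. pose proof (Rabs_pos sg); lra.
  - intros t Ht. replace (l + sg * (t - s) - (l + sg * (s' - s))) with (sg * (t - s')) by ring.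
    rewrite Rabs_mult. pose proof (Rabs_pos sg).
    assert (Rabs (t - s') < eps / (Rabs sg + 1)) by (rewrite Rabs_right; lra).
    assert (Rabs sg * Rabs (t - s') <= (Rabs sg + 1) * Rabs (t - s')).
    { apply Rmult_le_compat_r; [apply Rabs_pos|lra]. }
    assert ((Rabs sg + 1) * Rabs (t - s') < (Rabs sg + 1) * (eps / (Rabs sg + 1))).
    { apply Rmult_lt_compat_l; lra. }
    replace ((Rabs sg + 1) * (eps / (Rabs sg + 1))) with eps in H2 by (field; lra). lra.
Qed.

Lemma lin_sub a b M l sg s S : (1 <= M)%nat ->
  (forall q, s <= q <= s + S -> 0 <= l + sg * (q - s) <= 1) ->
  (forall q, s < q <= s + S -> sg <= gfun (a + b) (l + sg * (q - s))) ->
  subOn a b M (lin l sg s) s S.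
Proof.
  intros HM HB HG. unfold lin. split; [|split].
  - intros t y Ht. apply HB; auto.
  - intros y. apply rc_lin.
  - exists (fun _ _ => sg). intros t y Ht. split; [apply dpl_lin|].
    rewrite rhs_const; auto.
Qed.

Lemma lin_sup a b M l sg s S : (1 <= M)%nat ->
  (forall q, s <= q <= s + S -> 0 <= l + sg * (q - s) <= 1) ->
  (forall q, s < q <= s + S -> gfun (a + b) (l + sg * (q - s)) <= sg) ->
  supOn a b M (lin l sg s) s S.
Proof.
  intros HM HB HG. unfold lin. split; [|split].
  - intros t y Ht. apply HB; auto.
  - intros y. apply rc_lin.
  - exists (fun _ _ => sg). intros t y Ht. split; [apply dpl_lin|].
    rewrite rhs_const; auto.
Qed.

Lemma exists_nat_ge x : exists k : nat, x <= INR k.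
Proof.
  destruct (archimed x) as [H1 H2].
  destruct (Z_le_gt_dec 0 (up x)) as [Hz|Hz].
  - exists (Z.to_nat (up x)). rewrite INR_IZR_INZ, Z2Nat.id; auto. lra.
  - exists 0%nat. simpl. assert (Hz2 : (up x <= 0)%Z) by lia. apply IZR_le in Hz2. lra.
Qed.

Lemma limit_half x C : 0 <= C -> (forall n, x <= C * (/2) ^ n) -> x <= 0.
Proof.
  intros HC H. destruct (Rle_or_lt x 0) as [Hx|Hx]; [exact Hx|exfalso].
  destruct (pow_lt_1_zero (/2) ltac:(rewrite Rabs_right; lra) (x / (C + 1))) as [N HN].
  { apply Rdiv_lt_0_compat; lra. }
  specialize (HN N (le_n N)). rewrite Rabs_right in HN by (apply Rle_ge, pow_le; lra).
  specialize (H N). pose proof (pow_le (/2) N ltac:(lra)).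
  assert (C * (/2) ^ N <= (C + 1) * (/2) ^ N) by nra.
  assert ((C + 1) * (/2) ^ N < (C + 1) * (x / (C + 1))) by (apply Rmult_lt_compat_l; lra).
  replace ((C + 1) * (x / (C + 1))) with x in H2 by (field; lra). lra.
Qed.

Lemma CCLS a b M Sl : 0 < a -> 0 < b -> (1 <= M)%nat -> 0 <= Sl ->
  exists k : nat, (1 <= k)%nat /\ forall w v s G e,
  subOn a b M w s Sl -> supOn a b M v s Sl -> 0 <= e ->
  (forall y, G y -> w s y - v s y <= e) ->
  forall n y, depth G M (k * n) y -> forall t, s <= t <= s + Sl ->
    w t y - v t y <= 2 ^ k * (e + (/2) ^ n).
Proof.
  intros Ha Hb HM HS.
  destruct (exists_nat_ge (4 * (a + b) * Sl)) as [k0 Hk0].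
  exists (S k0). split; [lia|]. intros w v s G e Hw Hv He HG n y Hy t Ht.
  assert (Hk : 0 < INR (S k0)) by (apply lt_0_INR; lia).
  rewrite S_INR in Hk. set (T := Sl / INR (S k0)).
  assert (HkT : INR (S k0) * T = Sl) by (unfold T; field; rewrite S_INR; lra).
  assert (HT : 0 <= T) by (unfold T; apply Rmult_le_pos; [lra|]; left; apply Rinv_0_lt_compat; rewrite S_INR; lra).
  assert (HT4 : 4 * (a + b) * T <= 1).
  { unfold T. rewrite S_INR. apply (Rmult_le_reg_r (INR k0 + 1)); [lra|].
    field_simplify; [|lra]. lra. }
  rewrite <- HkT in Hw, Hv, Ht.
  pose proof (CCLk a b M w v s T G e (S k0) Ha Hb HM HT HT4 Hw Hv He HG n y Hy t Ht).
  pose proof (pow_le (/2) n ltac:(lra)). lra.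
Qed.

Lemma GCP a b M w v s S : 0 < a -> 0 < b -> (1 <= M)%nat -> 0 <= S ->
  subOn a b M w s S -> supOn a b M v s S -> (forall y, w s y <= v s y) ->
  forall t y, s <= t <= s + S -> w t y <= v t y.
Proof.
  intros Ha Hb HM HS Hw Hv H0 t y Ht.
  destruct (CCLS a b M S Ha Hb HM HS) as [k [_ Hk]].
  assert (forall n, w t y - v t y <= 2 ^ k * (/2) ^ n).
  { intros n. pose proof (Hk w v s (fun _ => True) 0 Hw Hv (Rle_refl 0)
       ltac:(intros z _; specialize (H0 z); lra) n y ltac:(intros z _; exact I) t Ht). lra. }
  assert (w t y - v t y <= 0); [|lra].
  apply (limit_half _ (2 ^ k)); [apply pow_le; lra|exact H].
Qed.


Lemma floor_nat y : 0 <= y -> exists i : nat, INR i <= y < INR i + 1.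
Proof.
  intros Hy. destruct (base_Int_part y) as [H1 H2].
  assert (Hz : (0 <= Int_part y)%Z).
  { destruct (Z_le_gt_dec 0 (Int_part y)) as [h|h]; [exact h|].
    assert (Hh : (Int_part y <= -1)%Z) by lia. apply IZR_le in Hh. lra. }
  exists (Z.to_nat (Int_part y)). rewrite INR_IZR_INZ, Z2Nat.id by exact Hz. lra.
Qed.


Lemma spread_generic (V : R -> Z -> R) (p eta t0 T kap A nu nu' : R) (B N' : Z) (J : nat) :
  0 < t0 -> 0 < T -> 0 < eta -> kap * T = 4 * eta -> nu' <= eta / 4 -> 1 <= A -> 0 <= nu ->
  INR J * A ^ J * nu <= eta / 4 -> (0 <= B)%Z -> (0 <= N')%Z -> Z.of_nat J = (N' + 1)%Z ->
  (forall s W e, T <= s -> (B <= W)%Z -> 0 <= e <= eta / 4 ->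
     (forall y, (Z.abs y <= W)%Z -> p - e <= V s y) ->
     forall y, (Z.abs y <= W + 1)%Z -> p - A * (e + nu) <= V (s + t0) y) ->
  (forall s W l, T <= s -> p - eta / 4 <= l <= p ->
     (forall y, (Z.abs y <= W)%Z -> l <= V s y) ->
     forall t y, s <= t <= s + t0 -> (Z.abs y <= W - B)%Z -> l - A * nu <= V t y) ->
  (forall s W l, 0 <= s -> p - 2 * eta <= l <= p ->
     (forall y, (Z.abs y <= W)%Z -> l <= V s y) ->
     forall t y, s <= t <= s + T -> (Z.abs y <= W - N')%Z -> l + kap * (t - s) - nu' <= V t y) ->
  (forall y, IZR (Z.abs y) <= IZR (B + N') -> p - 2 * eta <= V 0 y) ->
  forall t x, 0 < t -> IZR (Z.abs x) <= / (INR J * t0 + T) * t - (T / (INR J * t0 + T) + 1) ->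
    p - 7 * eta / 4 <= V t x.
Proof.
  intros Ht0 HT Heta HkT Hnu' HA Hnu HJ HB HN' HJN HX HS HR Hinit.
  set (Tc := INR J * t0 + T).
  assert (HJ0 : 0 <= INR J) by apply pos_INR.
  assert (HTc : 0 < Tc) by (unfold Tc; nra).
  set (Inv := fun s W => forall y, (Z.abs y <= W)%Z -> p <= V s y).
  assert (Hmono : forall j, (j <= J)%nat -> INR j * A ^ j * nu <= eta / 4).
  { intros j Hj. apply Rle_trans with (INR J * A ^ J * nu); [|exact HJ].
    apply Rmult_le_compat_r; [exact Hnu|].
    apply Rmult_le_compat; [apply pos_INR| apply pow_le; lra| apply le_INR; exact Hj| apply Rle_pow; auto]. }
  assert (HAnu : A * nu <= eta / 4).
  { destruct J as [|J']. { simpl in HJN. lia. }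
    apply Rle_trans with (INR (S J') * A ^ (S J') * nu); [|exact HJ].
    rewrite S_INR. simpl.
    assert (1 <= A ^ J') by (apply pow_R1_Rle; exact HA).
    assert (0 <= INR J') by apply pos_INR.
    assert (A * nu <= A * A ^ J' * nu) by (apply Rmult_le_compat_r; [exact Hnu|]; nra).
    assert (0 <= INR J' * (A * A ^ J') * nu) by (apply Rmult_le_pos; [apply Rmult_le_pos|]; nra).
    nra. }
  assert (Hcycle : forall s W, T <= s -> (B <= W)%Z -> Inv s W ->
            Inv (s + Tc) (W + 1)%Z /\
            forall t x, s <= t <= s + Tc -> (Z.abs x <= W - B)%Z -> p - eta / 2 <= V t x).
  { intros s W Hs HW HI.
    assert (Hj : forall j, (j <= J)%nat ->
      (forall y, (Z.abs y <= W + Z.of_nat j)%Z -> p - INR j * A ^ j * nu <= V (s + INR j * t0) y) /\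
      (forall t x, s <= t <= s + INR j * t0 -> (Z.abs x <= W - B)%Z -> p - eta / 2 <= V t x)).
    { induction j as [|j IH]; intros Hj.
      - split.
        + intros y Hy. replace (s + INR 0 * t0) with s by (simpl; ring).
          replace (p - INR 0 * A ^ 0 * nu) with p by (simpl; ring). apply HI. lia.
        + intros t x Ht Hx. simpl in Ht. replace t with s by lra.
          apply Rle_trans with p; [lra|]. apply HI. lia.
      - destruct (IH ltac:(lia)) as [IH1 IH2].
        pose proof (Hmono j ltac:(lia)) as Hm.
        assert (He0 : 0 <= INR j * A ^ j * nu).
        { apply Rmult_le_pos; [apply Rmult_le_pos; [apply pos_INR|apply pow_le; lra]|exact Hnu]. }
        assert (Hsj : T <= s + INR j * t0) by (pose proof (pos_INR j); nra).
        split.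
        + intros y Hy.
          assert (Hx := HX (s + INR j * t0) (W + Z.of_nat j)%Z (INR j * A ^ j * nu) Hsj
                        ltac:(lia) ltac:(lra) IH1 y ltac:(lia)).
          replace (s + INR (S j) * t0) with (s + INR j * t0 + t0) by (rewrite S_INR; ring).
          apply Rle_trans with (p - A * (INR j * A ^ j * nu + nu)); [|exact Hx].
          rewrite S_INR. simpl.
          assert (A * nu <= A * A ^ j * nu).
          { apply Rmult_le_compat_r; [exact Hnu|]. assert (1 <= A ^ j) by (apply pow_R1_Rle; lra). nra. }
          nra.
        + intros t x Ht Hx.
          destruct (Rle_or_lt t (s + INR j * t0)) as [Hle|Hgt]; [apply IH2; auto; lra|].
          assert (Hst := HS (s + INR j * t0) (W + Z.of_nat j)%Z (p - INR j * A ^ j * nu) Hsj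
                           ltac:(lra) IH1 t x ltac:(rewrite S_INR in Ht; lra) ltac:(lia)).
          lra. }
    destruct (Hj J (le_n J)) as [HJ1 HJ2].
    assert (HsJ : 0 <= s + INR J * t0) by nra.
    pose proof (Hmono J (le_n J)) as HmJ.
    assert (0 <= INR J * A ^ J * nu).
    { apply Rmult_le_pos; [apply Rmult_le_pos; [apply pos_INR|apply pow_le; lra]|exact Hnu]. }
    assert (HRi := HR (s + INR J * t0) (W + Z.of_nat J)%Z (p - INR J * A ^ J * nu) HsJ ltac:(lra) HJ1).
    split.
    - intros y Hy. unfold Tc. replace (s + (INR J * t0 + T)) with (s + INR J * t0 + T) by ring.
      assert (H1 := HRi (s + INR J * t0 + T) y ltac:(lra) ltac:(lia)).
      lra.
    - intros t x Ht Hx. unfold Tc in Ht.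
      destruct (Rle_or_lt t (s + INR J * t0)) as [Hle|Hgt]; [apply HJ2; auto; lra|].
      assert (H1 := HRi t x ltac:(lra) ltac:(lia)).
      assert (0 <= kap * (t - (s + INR J * t0))).
      { apply Rmult_le_pos; [|lra]. nra. }
      lra. }
  assert (Hinv0 : Inv T B).
  { intros y Hy.
    assert (H1 := HR 0 (B + N')%Z (p - 2 * eta) (Rle_refl 0) ltac:(lra)).
    assert (H2 : forall y, (Z.abs y <= B + N')%Z -> p - 2 * eta <= V 0 y)
      by (intros z Hz; apply Hinit; apply IZR_le; exact Hz).
    specialize (H1 H2 T y ltac:(lra) ltac:(lia)). lra. }
  assert (Hall : forall i : nat, Inv (T + INR i * Tc) (B + Z.of_nat i)%Z /\
       forall t x, T + INR i * Tc <= t <= T + INR i * Tc + Tc -> (Z.abs x <= Z.of_nat i)%Z ->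
          p - eta / 2 <= V t x).
  { induction i as [|i IH].
    - simpl. rewrite Rmult_0_l, Rplus_0_r, Z.add_0_r. split; [exact Hinv0|].
      intros t x Ht Hx. apply (proj2 (Hcycle T B ltac:(lra) ltac:(lia) Hinv0)); auto. lia.
    - destruct IH as [IH1 _].
      assert (Hs : T <= T + INR i * Tc) by (pose proof (pos_INR i); nra).
      destruct (Hcycle _ (B + Z.of_nat i)%Z Hs ltac:(lia) IH1) as [C1 _].
      assert (Hs' : T <= T + INR (S i) * Tc) by (pose proof (pos_INR (S i)); nra).
      assert (C1' : Inv (T + INR (S i) * Tc) (B + Z.of_nat (S i))%Z).
      { replace (T + INR (S i) * Tc) with (T + INR i * Tc + Tc) by (rewrite S_INR; ring).
        replace (B + Z.of_nat (S i))%Z with (B + Z.of_nat i + 1)%Z by lia. exact C1. }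
      split; [exact C1'|].
      intros t x Ht Hx. apply (proj2 (Hcycle _ (B + Z.of_nat (S i))%Z Hs' ltac:(lia) C1')); auto. lia. }
  intros t x Ht Hx.
  pose proof (IZR_le 0 (Z.abs x) ltac:(lia)) as Hax.
  assert (Hq : 0 <= (t - T) / Tc).
  { assert (/ Tc * t - (T / Tc + 1) = (t - T) / Tc - 1) by (field; lra).
    assert (0 <= (t - T) / Tc - 1) by lra. lra. }
  destruct (floor_nat _ Hq) as [i [Hi1 Hi2]].
  assert (Hxi : IZR (Z.abs x) < INR i).
  { assert (/ Tc * t - (T / Tc + 1) = (t - T) / Tc - 1) by (field; lra). lra. }
  rewrite INR_IZR_INZ in Hxi. apply lt_IZR in Hxi.
  assert (Ht1 : T + INR i * Tc <= t <= T + INR i * Tc + Tc).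
  { assert (INR i * Tc <= t - T).
    { apply (Rmult_le_compat_r Tc) in Hi1; [|lra].
      replace ((t - T) / Tc * Tc) with (t - T) in Hi1 by (field; lra). exact Hi1. }
    assert (t - T <= (INR i + 1) * Tc).
    { apply Rlt_le in Hi2. apply (Rmult_le_compat_r Tc) in Hi2; [|lra].
      replace ((t - T) / Tc * Tc) with (t - T) in Hi2 by (field; lra). exact Hi2. }
    lra. }
  pose proof (proj2 (Hall i) t x Ht1 ltac:(lia)). lra.
Qed.


Lemma w_facts a b : 4 <= a + b ->
  sqrt (/4 - /(a + b)) * sqrt (/4 - /(a + b)) = /4 - /(a + b) /\
  0 <= sqrt (/4 - /(a + b)) /\ sqrt (/4 - /(a + b)) <= /2.
Proof.
  intros H.
  assert (H1 : 0 <= /4 - /(a + b)).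
  { assert (/(a+b) <= /4) by (apply Rinv_le_contravar; lra). lra. }
  assert (H2 : /(a+b) > 0) by (apply Rinv_0_lt_compat; lra).
  pose proof (sqrt_sqrt _ H1) as E. pose proof (sqrt_pos (/4 - /(a+b))).
  repeat split; auto.
  destruct (Rle_or_lt (sqrt (/4 - /(a + b))) (/2)) as [h|h]; auto. nra.
Qed.

Lemma gfun_fact a b y : 4 <= a + b ->
  gfun (a + b) y = y * (a + b) * (y - u_minus a b) * (u_plus a b - y).
Proof.
  intros H. destruct (w_facts a b H) as [E _].
  unfold gfun, u_minus, u_plus. set (w := sqrt (/4 - /(a + b))) in *.
  replace (y * (a + b) * (y - (/ 2 - w)) * (/ 2 + w - y)) with (y * (a + b) * (w * w - (y - /2) ^ 2)) by ring.
  rewrite E. field. lra.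
Qed.

Lemma um_nonneg a b : 4 <= a + b -> 0 <= u_minus a b /\ u_minus a b <= u_plus a b /\ u_plus a b <= 1.
Proof. intros H. destruct (w_facts a b H) as [_ [H1 H2]]. unfold u_minus, u_plus. lra. Qed.

Lemma small_pow C eps : 0 < eps -> exists n : nat, C * (/2) ^ n <= eps.
Proof.
  intros He.
  destruct (pow_lt_1_zero (/2) ltac:(rewrite Rabs_right; lra) (eps / (Rabs C + 1))) as [N HN].
  { apply Rdiv_lt_0_compat; [lra|pose proof (Rabs_pos C); lra]. }
  exists N. specialize (HN N (le_n N)). rewrite Rabs_right in HN by (apply Rle_ge, pow_le; lra).
  pose proof (pow_le (/2) N ltac:(lra)). pose proof (Rabs_pos C).
  assert (C * (/2) ^ N <= Rabs C * (/2) ^ N) by (apply Rmult_le_compat_r; [lra|apply Rle_abs]).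
  assert (Rabs C * (/2) ^ N <= (Rabs C + 1) * (/2) ^ N) by nra.
  assert (Hq : (Rabs C + 1) * (/2) ^ N < (Rabs C + 1) * (eps / (Rabs C + 1))) by (apply Rmult_lt_compat_l; lra).
  replace ((Rabs C + 1) * (eps / (Rabs C + 1))) with eps in Hq by (field; lra). lra.
Qed.

Lemma depth_window W M n y : (Z.abs y <= W - Z.of_nat (n * M))%Z ->
  depth (fun z => (Z.abs z <= W)%Z) M n y.
Proof. unfold depth. intros H z Hz. lia. Qed.

Lemma depth_half W M n y : (- W + Z.of_nat (n * M) <= y)%Z ->
  depth (fun z => (- W <= z)%Z) M n y.
Proof. unfold depth. intros H z Hz. lia. Qed.

Definition CCLprop a b M Sl k : Prop := forall w v s G e,
  subOn a b M w s Sl -> supOn a b M v s Sl -> 0 <= e ->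
  (forall y, G y -> w s y - v s y <= e) ->
  forall n y, depth G M (k * n) y -> forall t, s <= t <= s + Sl ->
    w t y - v t y <= 2 ^ k * (e + (/2) ^ n).


Lemma Emono a b M p E : 0 < a -> 0 < b -> (1 <= M)%nat -> mf_solution a b M E ->
  (forall x, E 0 x = if Z.leb x 0 then p else 0) -> 0 <= p ->
  forall t, 0 <= t -> forall x, E t (x + 1)%Z <= E t x.
Proof.
  intros Ha Hb HM HE H0 Hp t Ht x.
  destruct (sol_shift_on a b M E 0 (-1) 0 t HE (Rle_refl 0) Ht) as [Hw _].
  destruct (sol_on a b M E 0 t HE (Rle_refl 0) Ht) as [_ Hv].
  assert (H := GCP a b M (shiftf E 0 (-1)) E 0 t Ha Hb HM Ht Hw Hv).
  unfold shiftf in H.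
  assert (H' := H ltac:(intros y; rewrite Rminus_0_r, !H0;
    destruct (Z.leb (y - -1) 0) eqn:E1; destruct (Z.leb y 0) eqn:E2; try lra;
    apply Z.leb_le in E1; apply Z.leb_gt in E2; lia) t x ltac:(lra)).
  rewrite Rminus_0_r in H'. replace (x - -1)%Z with (x + 1)%Z in H' by ring. exact H'.
Qed.

Lemma Emono2 a b M p E : 0 < a -> 0 < b -> (1 <= M)%nat -> mf_solution a b M E ->
  (forall x, E 0 x = if Z.leb x 0 then p else 0) -> 0 <= p ->
  forall t, 0 <= t -> forall x, (x <= 1)%Z -> E t 1%Z <= E t x.
Proof.
  intros Ha Hb HM HE H0 Hp t Ht x Hx.
  remember (Z.to_nat (1 - x)) as d eqn:Hd. revert x Hx Hd.
  induction d as [|d IH]; intros x Hx Hd.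
  - assert (x = 1)%Z by lia. subst. lra.
  - apply Rle_trans with (E t (x + 1)%Z).
    + apply IH; lia.
    + apply (Emono a b M p E); auto.
Qed.

Lemma XS a b M p E t0 k : 0 < a -> 0 < b -> (1 <= M)%nat -> CCLprop a b M t0 k ->
  mf_solution a b M E -> (forall x, E 0 x = if Z.leb x 0 then p else 0) -> 0 <= p ->
  0 < t0 -> E t0 1%Z = p ->
  forall v, mf_solution a b M v -> forall s W e n, 0 <= s -> 0 <= e ->
  (forall y, (Z.abs y <= W)%Z -> p - e <= v s y) ->
  forall y, (- W + Z.of_nat (k * n * M) <= y <= W + 1)%Z -> p - 2 ^ k * (e + (/2) ^ n) <= v (s + t0) y.
Proof.
  intros Ha Hb HM Hk HE H0 Hp Ht0 Hp1 v Hv s W e n Hs He Hin y Hy.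
  destruct (sol_shift_on a b M E s W s t0 HE (Rle_refl s) ltac:(lra)) as [Hw _].
  destruct (sol_on a b M v s t0 Hv Hs ltac:(lra)) as [_ Hv'].
  assert (H := Hk (shiftf E s W) v s (fun z => (- W <= z)%Z) e Hw Hv' He).
  assert (H2 : shiftf E s W (s + t0) y - v (s + t0) y <= 2 ^ k * (e + (/2) ^ n)).
  { apply H.
    - intros z Hz. unfold shiftf. rewrite Rminus_diag, H0.
      destruct (Z.leb (z - W) 0) eqn:E1.
      + apply Z.leb_le in E1. assert (p - e <= v s z) by (apply Hin; lia). lra.
      + destruct Hv as [B _]. pose proof (B s z Hs). lra.
    - apply depth_half. lia.
    - lra. }
  unfold shiftf in H2. replace (s + t0 - s) with t0 in H2 by ring.
  assert (p <= E t0 (y - W)%Z).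
  { rewrite <- Hp1. apply (Emono2 a b M p E); auto. lra. lia. }
  lra.
Qed.

Lemma XS2 a b M p E t0 k : 0 < a -> 0 < b -> (1 <= M)%nat -> CCLprop a b M t0 k ->
  mf_solution a b M E -> (forall x, E 0 x = if Z.leb x 0 then p else 0) -> 0 <= p ->
  0 < t0 -> E t0 1%Z = p ->
  forall v, mf_solution a b M v -> forall s W e n, 0 <= s -> 0 <= e ->
  (Z.of_nat (k * n * M) <= W)%Z ->
  (forall y, (Z.abs y <= W)%Z -> p - e <= v s y) ->
  forall y, (Z.abs y <= W + 1)%Z -> p - 2 ^ k * (e + (/2) ^ n) <= v (s + t0) y.
Proof.
  intros Ha Hb HM Hk HE H0 Hp Ht0 Hp1 v Hv s W e n Hs He HW Hin y Hy.
  destruct (Z_le_gt_dec (- W + Z.of_nat (k * n * M)) y) as [h|h].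
  - apply (XS a b M p E t0 k Ha Hb HM Hk HE H0 Hp Ht0 Hp1 v Hv s W e n Hs He Hin). lia.
  - assert (H := XS a b M p E t0 k Ha Hb HM Hk HE H0 Hp Ht0 Hp1 (reflf v) (refl_sol a b M v Hv)
                   s W e n Hs He).
    unfold reflf in H. replace y with (- (- y))%Z by ring. apply H; [|lia].
    intros z Hz. apply Hin. lia.
Qed.

Lemma STAY a b M t0 k al be : (1 <= M)%nat -> CCLprop a b M t0 k -> 0 <= t0 ->
  0 <= al -> be <= 1 -> (forall y, al <= y <= be -> 0 <= gfun (a + b) y) ->
  forall v, mf_solution a b M v -> forall s W l, 0 <= s -> al <= l <= be ->
  (forall y, (Z.abs y <= W)%Z -> l <= v s y) ->
  forall n t y, s <= t <= s + t0 -> (Z.abs y <= W - Z.of_nat (k * n * M))%Z ->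
    l - 2 ^ k * (/2) ^ n <= v t y.
Proof.
  intros HM Hk Ht0 Hal Hbe Hg v Hv s W l Hs Hl Hin n t y Ht Hy.
  assert (Hw : subOn a b M (lin l 0 s) s t0).
  { apply lin_sub; auto.
    - intros q Hq. rewrite Rmult_0_l, Rplus_0_r. lra.
    - intros q Hq. rewrite Rmult_0_l, Rplus_0_r. apply Hg; lra. }
  destruct (sol_on a b M v s t0 Hv Hs Ht0) as [_ Hv'].
  assert (H := Hk (lin l 0 s) v s (fun z => (Z.abs z <= W)%Z) 0 Hw Hv' (Rle_refl 0)).
  assert (H2 : lin l 0 s t y - v t y <= 2 ^ k * (0 + (/2) ^ n)).
  { apply H; auto.
    - intros z Hz. unfold lin. rewrite Rminus_diag, Rmult_0_l, Rplus_0_r. specialize (Hin z Hz). lra.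
    - apply depth_window. exact Hy. }
  unfold lin in H2. rewrite Rmult_0_l, Rplus_0_r in H2. lra.
Qed.

Lemma RISE a b M T kap al be : 0 < a -> 0 < b -> (1 <= M)%nat -> 0 <= T -> 4 * (a + b) * T <= 1 ->
  0 <= kap -> 0 <= al -> be <= 1 -> (forall y, al <= y <= be -> kap <= gfun (a + b) y) ->
  forall v, mf_solution a b M v -> forall s W l, 0 <= s -> al <= l -> l + kap * T <= be ->
  (forall y, (Z.abs y <= W)%Z -> l <= v s y) ->
  forall n t y, s <= t <= s + T -> (Z.abs y <= W - Z.of_nat (n * M))%Z ->
    l + kap * (t - s) - (/2) ^ n <= v t y.
Proof.
  intros Ha Hb HM HT HT4 Hk Hal Hbe Hg v Hv s W l Hs Hl1 Hl2 Hin n t y Ht Hy.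
  assert (Hr : forall q, s <= q <= s + T -> al <= l + kap * (q - s) <= be).
  { intros q Hq. assert (0 <= kap * (q - s) <= kap * T).
    { split; [apply Rmult_le_pos; lra|apply Rmult_le_compat_l; lra]. } lra. }
  assert (Hw : subOn a b M (lin l kap s) s T).
  { apply lin_sub; auto.
    - intros q Hq. specialize (Hr q Hq). lra.
    - intros q Hq. apply Hg. apply Hr. lra. }
  destruct (sol_on a b M v s T Hv Hs HT) as [_ Hv'].
  assert (H := CCL1 a b M (lin l kap s) v s T (fun z => (Z.abs z <= W)%Z) 0 Ha Hb HM HT HT4 Hw Hv' (Rle_refl 0)).
  assert (H2 : lin l kap s t y - v t y <= 2 * 0 + (/2) ^ n).
  { apply H; auto.
    - intros z Hz. unfold lin. rewrite Rminus_diag, Rmult_0_r, Rplus_0_r. specialize (Hin z Hz). lra.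
    - apply depth_window. exact Hy. }
  unfold lin in H2. lra.
Qed.


Lemma prod4_le x1 x2 x3 x4 y1 y2 y3 y4 : 0 <= x1 <= y1 -> 0 <= x2 <= y2 -> 0 <= x3 <= y3 -> 0 <= x4 <= y4 ->
  x1 * x2 * x3 * x4 <= y1 * y2 * y3 * y4.
Proof.
  intros. apply Rmult_le_compat; [| |apply Rmult_le_compat; [| |apply Rmult_le_compat|]|]; try lra;
  repeat apply Rmult_le_pos; lra.
Qed.

Lemma part1 a b M (ha : 0 < a) (hb : 0 < b) (hM : (1 <= M)%nat) :
  expansion a b M ->
     exists u L x0 delta c,
       0 < u /\ 0 < L /\ 0 < x0 /\ 0 < delta /\ 0 < c /\
       u_minus a b < u < u_plus a b /\
       forall v, mf_solution a b M v ->
         (forall x, IZR (Z.abs x) <= L -> u <= v 0 x) ->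
         forall t x, 0 < t -> IZR (Z.abs x) <= c * t - x0 -> u + delta <= v t x.
Proof.
  intros [Hr [p [[Hp1 Hp2] [E [HE [H0 [t0 [Ht0 HE1]]]]]]]].
  destruct (um_nonneg a b ltac:(lra)) as [Hum [Humup Hup]].
  set (um := u_minus a b) in *. set (up := u_plus a b) in *.
  set (al := (um + p) / 2). set (be := (p + up) / 2).
  set (k0 := al * (a + b) * (al - um) * (up - be)).
  assert (Hk0 : 0 < k0) by (unfold k0, al, be; repeat apply Rmult_lt_0_compat; lra).
  assert (Hg : forall y, al <= y <= be -> k0 <= gfun (a + b) y).
  { intros y Hy. rewrite gfun_fact by lra. fold um up. unfold k0.
    apply prod4_le; unfold al, be in *; lra. }
  set (T := / (4 * (a + b))).
  assert (HT : 0 < T) by (unfold T; apply Rinv_0_lt_compat; lra).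
  assert (HT4 : 4 * (a + b) * T = 1) by (unfold T; field; lra).
  set (kap := Rmin k0 (Rmin ((be - p) / T) ((p - al) / T))).
  assert (Hkap1 : kap <= k0) by apply Rmin_l.
  assert (Hkap2 : kap * T <= be - p).
  { assert (kap <= (be - p) / T) by (eapply Rle_trans; [apply Rmin_r|apply Rmin_l]).
    apply (Rmult_le_compat_r T) in H; [|lra]. replace ((be - p) / T * T) with (be - p) in H by (field; lra). exact H. }
  assert (Hkap3 : kap * T <= p - al).
  { assert (kap <= (p - al) / T) by (eapply Rle_trans; [apply Rmin_r|apply Rmin_r]).
    apply (Rmult_le_compat_r T) in H; [|lra]. replace ((p - al) / T * T) with (p - al) in H by (field; lra). exact H. }
  assert (Hkap : 0 < kap).
  { unfold kap. apply Rmin_glb_lt; [lra|]. apply Rmin_glb_lt; apply Rdiv_lt_0_compat; unfold al, be; lra. }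
  assert (HkT : 0 < kap * T) by (apply Rmult_lt_0_compat; lra).
  set (eta := kap * T / 4).
  assert (Heta : 0 < eta) by (unfold eta; apply Rmult_lt_0_compat; [apply Rmult_lt_0_compat|]; lra).
  destruct (CCLS a b M t0 ha hb hM ltac:(lra)) as [k [_ Hk]].
  destruct (small_pow 1 (eta / 4) ltac:(lra)) as [n1 Hn1].
  set (n' := S n1).
  assert (Hn' : (/2) ^ n' <= eta / 4).
  { unfold n'. simpl. pose proof (pow_le (/2) n1 ltac:(lra)). lra. }
  set (J := (n' * M + 1)%nat).
  set (A := 2 ^ k).
  destruct (small_pow (INR J * A ^ J) (eta / 4) ltac:(lra)) as [n Hn].
  set (B := Z.of_nat (k * n * M)). set (N' := Z.of_nat (n' * M)).
  assert (HN'1 : (1 <= N')%Z) by (unfold N', n'; assert (1 <= S n1 * M)%nat by nia; lia).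
  assert (HB0 : (0 <= B)%Z) by (unfold B; lia).
  assert (Hum_al : um < al) by (unfold al; lra).
  assert (Hu : al <= p - 2 * eta) by (unfold eta; lra).
  exists (p - 2 * eta), (IZR (B + N')), (T / (INR J * t0 + T) + 1), (eta / 4), (/ (INR J * t0 + T)).
  assert (HTc : 0 < INR J * t0 + T) by (pose proof (pos_INR J); nra).
  split; [lra|]. split; [apply IZR_lt; lia|]. split.
  { assert (0 < T / (INR J * t0 + T)) by (apply Rdiv_lt_0_compat; lra). lra. }
  split; [lra|]. split; [apply Rinv_0_lt_compat; lra|]. split; [unfold eta in *; split; lra|].
  intros v Hv Hinit t x Ht Hx.
  replace (p - 2 * eta + eta / 4) with (p - 7 * eta / 4) by field.
  apply (spread_generic v p eta t0 T kap A ((/2) ^ n) ((/2) ^ n') B N' J); auto.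
  - unfold eta; field.
  - apply pow2_ge1.
  - apply pow_le; lra.
  - lia.
  - unfold J. rewrite Nat2Z.inj_add. unfold N'. simpl. lia.
  - intros s W e Hs HW He Hin y Hy.
    apply (XS2 a b M p E t0 k ha hb hM Hk HE H0 ltac:(lra) Ht0 HE1 v Hv s W e n ltac:(lra) ltac:(lra) HW Hin y Hy).
  - intros s W l Hs Hl Hin t' y Ht' Hy.
    apply (STAY a b M t0 k al be hM Hk ltac:(lra) ltac:(lra) ltac:(unfold be; lra)
             ltac:(intros z Hz; specialize (Hg z Hz); lra) v Hv s W l ltac:(lra) ltac:(unfold eta in *; lra) Hin n t' y Ht' Hy).
  - intros s W l Hs Hl Hin t' y Ht' Hy.
    apply (RISE a b M T kap al be ha hb hM ltac:(lra) ltac:(lra) ltac:(lra) ltac:(lra) ltac:(unfold be; lra)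
             ltac:(intros z Hz; specialize (Hg z Hz); lra) v Hv s W l Hs ltac:(unfold eta in *; lra)
             ltac:(unfold eta in *; lra) Hin n' t' y Ht' Hy).
Qed.


Lemma mono_gen a b M E : 0 < a -> 0 < b -> (1 <= M)%nat -> mf_solution a b M E ->
  (forall x, E 0 (x + 1)%Z <= E 0 x) ->
  forall t, 0 <= t -> forall x, E t (x + 1)%Z <= E t x.
Proof.
  intros Ha Hb HM HE H0 t Ht x.
  destruct (sol_shift_on a b M E 0 (-1) 0 t HE (Rle_refl 0) Ht) as [Hw _].
  destruct (sol_on a b M E 0 t HE (Rle_refl 0) Ht) as [_ Hv].
  assert (H := GCP a b M (shiftf E 0 (-1)) E 0 t Ha Hb HM Ht Hw Hv).
  unfold shiftf in H.
  assert (H' := H ltac:(intros y; rewrite Rminus_0_r; replace (y - -1)%Z with (y + 1)%Z by ring; apply H0)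
                  t x ltac:(lra)).
  rewrite Rminus_0_r in H'. replace (x - -1)%Z with (x + 1)%Z in H' by ring. exact H'.
Qed.

Lemma Rmono2 a b M p uh R : 0 < a -> 0 < b -> (1 <= M)%nat -> mf_solution a b M R ->
  (forall x, R 0 x = if Z.ltb x 0 then uh else p) -> p <= uh ->
  forall t, 0 <= t -> forall x, (-1 <= x)%Z -> R t x <= R t (-1)%Z.
Proof.
  intros Ha Hb HM HR H0 Hp t Ht x Hx.
  assert (Hm : forall x, R t (x + 1)%Z <= R t x).
  { apply (mono_gen a b M R Ha Hb HM HR); auto. intros y. rewrite !H0.
    destruct (Z.ltb (y + 1) 0) eqn:E1; destruct (Z.ltb y 0) eqn:E2; try lra.
    apply Z.ltb_lt in E1; apply Z.ltb_ge in E2. lia. }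
  remember (Z.to_nat (x + 1)) as d eqn:Hd. revert x Hx Hd.
  induction d as [|d IH]; intros x Hx Hd.
  - assert (x = -1)%Z by lia. subst. lra.
  - apply Rle_trans with (R t (x - 1)%Z).
    + replace x with (x - 1 + 1)%Z at 1 by ring. apply Hm.
    + destruct (Z.eq_dec x 0) as [->|Hne]; [simpl; lra|]. apply IH; lia.
Qed.

Lemma XSr a b M p uh R t0 k : 0 < a -> 0 < b -> (1 <= M)%nat -> CCLprop a b M t0 k ->
  mf_solution a b M R -> (forall x, R 0 x = if Z.ltb x 0 then uh else p) -> p <= uh ->
  0 < t0 -> R t0 (-1)%Z = p ->
  forall v, mf_solution a b M v -> forall s W e n, 0 <= s -> 0 <= e ->
  (forall y, v s y <= uh) ->
  (forall y, (Z.abs y <= W)%Z -> v s y <= p + e) ->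
  forall y, (- W + Z.of_nat (k * n * M) <= y <= W + 1)%Z -> v (s + t0) y <= p + 2 ^ k * (e + (/2) ^ n).
Proof.
  intros Ha Hb HM Hk HR H0 Hp Ht0 Hp1 v Hv s W e n Hs He Hup Hin y Hy.
  destruct (sol_shift_on a b M (reflf R) s W s t0 (refl_sol a b M R HR) (Rle_refl s) ltac:(lra)) as [_ Hw].
  destruct (sol_on a b M v s t0 Hv Hs ltac:(lra)) as [Hv' _].
  assert (H := Hk v (shiftf (reflf R) s W) s (fun z => (- W <= z)%Z) e Hv' Hw He).
  assert (H2 : v (s + t0) y - shiftf (reflf R) s W (s + t0) y <= 2 ^ k * (e + (/2) ^ n)).
  { apply H.
    - intros z Hz. unfold shiftf, reflf. rewrite Rminus_diag, H0.
      destruct (Z.ltb (- (z - W)) 0) eqn:E1.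
      + specialize (Hup z). lra.
      + apply Z.ltb_ge in E1. assert (v s z <= p + e) by (apply Hin; lia). lra.
    - apply depth_half. lia.
    - lra. }
  unfold shiftf, reflf in H2. replace (s + t0 - s) with t0 in H2 by ring.
  assert (R t0 (- (y - W))%Z <= p).
  { rewrite <- Hp1. apply (Rmono2 a b M p uh R); auto. lra. lia. }
  lra.
Qed.

Lemma XS2r a b M p uh R t0 k : 0 < a -> 0 < b -> (1 <= M)%nat -> CCLprop a b M t0 k ->
  mf_solution a b M R -> (forall x, R 0 x = if Z.ltb x 0 then uh else p) -> p <= uh ->
  0 < t0 -> R t0 (-1)%Z = p ->
  forall v, mf_solution a b M v -> forall s W e n, 0 <= s -> 0 <= e ->
  (Z.of_nat (k * n * M) <= W)%Z ->
  (forall y, v s y <= uh) ->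
  (forall y, (Z.abs y <= W)%Z -> v s y <= p + e) ->
  forall y, (Z.abs y <= W + 1)%Z -> v (s + t0) y <= p + 2 ^ k * (e + (/2) ^ n).
Proof.
  intros Ha Hb HM Hk HR H0 Hp Ht0 Hp1 v Hv s W e n Hs He HW Hup Hin y Hy.
  destruct (Z_le_gt_dec (- W + Z.of_nat (k * n * M)) y) as [h|h].
  - apply (XSr a b M p uh R t0 k Ha Hb HM Hk HR H0 Hp Ht0 Hp1 v Hv s W e n Hs He Hup Hin). lia.
  - assert (H := XSr a b M p uh R t0 k Ha Hb HM Hk HR H0 Hp Ht0 Hp1 (reflf v) (refl_sol a b M v Hv)
                   s W e n Hs He).
    unfold reflf in H. replace y with (- (- y))%Z by ring. apply H; [| |lia].
    + intros z. apply Hup.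
    + intros z Hz. apply Hin. lia.
Qed.

Lemma FALLr a b M Sl k kap al be : (1 <= M)%nat -> CCLprop a b M Sl k -> 0 <= Sl ->
  0 <= kap -> 0 <= al -> be <= 1 -> (forall y, al <= y <= be -> gfun (a + b) y <= - kap) ->
  forall v, mf_solution a b M v -> forall s W l, 0 <= s -> al <= l - kap * Sl -> l <= be ->
  (forall y, (Z.abs y <= W)%Z -> v s y <= l) ->
  forall n t y, s <= t <= s + Sl -> (Z.abs y <= W - Z.of_nat (k * n * M))%Z ->
    v t y <= l - kap * (t - s) + 2 ^ k * (/2) ^ n.
Proof.
  intros HM Hk HS Hkap Hal Hbe Hg v Hv s W l Hs Hl1 Hl2 Hin n t y Ht Hy.
  assert (Hr : forall q, s <= q <= s + Sl -> al <= l + - kap * (q - s) <= be).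
  { intros q Hq. assert (0 <= kap * (q - s) <= kap * Sl).
    { split; [apply Rmult_le_pos; lra|apply Rmult_le_compat_l; lra]. } lra. }
  assert (Hw : supOn a b M (lin l (- kap) s) s Sl).
  { apply lin_sup; auto.
    - intros q Hq. specialize (Hr q Hq). lra.
    - intros q Hq. apply Hg. apply Hr. lra. }
  destruct (sol_on a b M v s Sl Hv Hs HS) as [Hv' _].
  assert (H := Hk v (lin l (- kap) s) s (fun z => (Z.abs z <= W)%Z) 0 Hv' Hw (Rle_refl 0)).
  assert (H2 : v t y - lin l (- kap) s t y <= 2 ^ k * (0 + (/2) ^ n)).
  { apply H; auto.
    - intros z Hz. unfold lin. rewrite Rminus_diag, Rmult_0_r, Rplus_0_r. specialize (Hin z Hz). lra.
    - apply depth_window. exact Hy. }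
  unfold lin in H2. lra.
Qed.

Lemma descent a b M uh kap2 : 0 < a -> 0 < b -> (1 <= M)%nat -> 0 < uh <= 1 -> 0 < kap2 ->
  (forall y, uh <= y <= 1 -> gfun (a + b) y <= - kap2) ->
  forall v, mf_solution a b M v -> forall s, (1 - uh) / kap2 <= s -> forall y, v s y <= uh.
Proof.
  intros Ha Hb HM Huh Hk Hg v Hv s Hs y.
  set (T1 := (1 - uh) / kap2).
  assert (HT1 : 0 <= T1) by (unfold T1; apply Rmult_le_pos; [lra|left; apply Rinv_0_lt_compat; lra]).
  assert (HkT : kap2 * T1 = 1 - uh) by (unfold T1; field; lra).
  assert (Hstep1 : forall z, v T1 z <= uh).
  { intros z.
    destruct (sol_on a b M v 0 T1 Hv (Rle_refl 0) HT1) as [Hw _].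
    assert (Hr : forall q, 0 <= q <= 0 + T1 -> uh <= 1 + - kap2 * (q - 0) <= 1).
    { intros q Hq. assert (0 <= kap2 * q <= kap2 * T1).
      { split; [apply Rmult_le_pos; lra|apply Rmult_le_compat_l; lra]. } lra. }
    assert (Hs1 : supOn a b M (lin 1 (- kap2) 0) 0 T1).
    { apply lin_sup; auto.
      - intros q Hq. specialize (Hr q Hq). lra.
      - intros q Hq. apply Hg. apply Hr. lra. }
    assert (H := GCP a b M v (lin 1 (- kap2) 0) 0 T1 Ha Hb HM HT1 Hw Hs1).
    assert (H' := H ltac:(intros w; unfold lin; destruct Hv as [B _]; specialize (B 0 w (Rle_refl 0)); lra)
                    T1 z ltac:(lra)).
    unfold lin in H'. lra. }
  assert (HsT : 0 <= s - T1) by (unfold T1 in *; lra).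
  destruct (sol_on a b M v T1 (s - T1) Hv HT1 HsT) as [Hw _].
  assert (Hs2 : supOn a b M (lin uh 0 T1) T1 (s - T1)).
  { apply lin_sup; auto.
    - intros q Hq. rewrite Rmult_0_l. lra.
    - intros q Hq. rewrite Rmult_0_l, Rplus_0_r. specialize (Hg uh ltac:(lra)). lra. }
  assert (H := GCP a b M v (lin uh 0 T1) T1 (s - T1) Ha Hb HM ltac:(lra) Hw Hs2).
  assert (H' := H ltac:(intros w; unfold lin; rewrite Rmult_0_l, Rplus_0_r; apply Hstep1) s y ltac:(lra)).
  unfold lin in H'. rewrite Rmult_0_l, Rplus_0_r in H'. exact H'.
Qed.


Lemma part2A a b M (ha : 0 < a) (hb : 0 < b) (hM : (1 <= M)%nat) : a + b < 4 ->
     exists u L x0 delta c,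
       0 < u /\ 0 < L /\ 0 < x0 /\ 0 < delta /\ 0 < c /\
       (a + b < 4 \/ u < u_minus a b) /\
       forall v, mf_solution a b M v ->
         (forall x, IZR (Z.abs x) <= L -> v 0 x <= u) ->
         forall t x, 0 < t -> IZR (Z.abs x) <= c * t - x0 -> v t x <= u - delta.
Proof.
  intros Hr.
  set (k3 := (1 - (a + b) / 4) / 2).
  assert (Hk3 : 0 < k3) by (unfold k3; lra).
  set (t1 := / (2 * k3)).
  assert (Ht1 : 0 < t1) by (unfold t1; apply Rinv_0_lt_compat; lra).
  assert (Hkt : k3 * t1 = /2) by (unfold t1; field; lra).
  assert (Hg : forall y, /2 <= y <= 1 -> gfun (a + b) y <= - k3).
  { intros y Hy. unfold gfun, k3.
    assert (y * (1 - y) <= /4) by nra.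
    assert ((a + b) * (y * (1 - y)) <= (a + b) / 4) by (replace ((a + b) / 4) with ((a + b) * /4) by field; apply Rmult_le_compat_l; lra).
    assert (y * ((a + b) * (y * (1 - y)) - 1) <= y * ((a + b) / 4 - 1)) by (apply Rmult_le_compat_l; lra).
    assert (y * ((a + b) / 4 - 1) <= /2 * ((a + b) / 4 - 1)) by nra.
    replace ((a + b) * y ^ 2 * (1 - y) - y) with (y * ((a + b) * (y * (1 - y)) - 1)) by ring. lra. }
  exists 1, 1, t1, (/2), 1.
  split; [lra|]. split; [lra|]. split; [lra|]. split; [lra|]. split; [lra|]. split; [left; exact Hr|].
  intros v Hv Hinit t x Ht Hx.
  assert (Hax : 0 <= IZR (Z.abs x)) by (apply IZR_le; lia).
  set (s := t - t1).
  assert (Hs : 0 <= s) by (unfold s; lra).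
  destruct (sol_on a b M v s t1 Hv Hs ltac:(lra)) as [Hw _].
  assert (Hr2 : forall q, s <= q <= s + t1 -> /2 <= 1 + - k3 * (q - s) <= 1).
  { intros q Hq. assert (0 <= k3 * (q - s) <= k3 * t1).
    { split; [apply Rmult_le_pos; lra|apply Rmult_le_compat_l; lra]. } lra. }
  assert (Hs1 : supOn a b M (lin 1 (- k3) s) s t1).
  { apply lin_sup; auto.
    - intros q Hq. specialize (Hr2 q Hq). lra.
    - intros q Hq. apply Hg. apply Hr2. lra. }
  assert (H := GCP a b M v (lin 1 (- k3) s) s t1 ha hb hM ltac:(lra) Hw Hs1).
  assert (H' := H ltac:(intros w; unfold lin; destruct Hv as [B _]; specialize (B s w Hs); lra)
                  t x ltac:(unfold s; lra)).
  unfold lin, s in H'. lra.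
Qed.

Lemma part2B a b M (ha : 0 < a) (hb : 0 < b) (hM : (1 <= M)%nat) :
  (4 <= a + b /\
   exists ulow uhigh,
     0 < ulow < u_minus a b /\ u_minus a b <= u_plus a b /\
     u_plus a b < uhigh <= 1 /\
     exists v, mf_solution a b M v /\
       (forall x, v 0 x = if Z.ltb x 0 then uhigh else ulow) /\
       exists t0, 0 < t0 /\ v t0 (-1)%Z = ulow) ->
     exists u L x0 delta c,
       0 < u /\ 0 < L /\ 0 < x0 /\ 0 < delta /\ 0 < c /\
       (a + b < 4 \/ u < u_minus a b) /\
       forall v, mf_solution a b M v ->
         (forall x, IZR (Z.abs x) <= L -> v 0 x <= u) ->
         forall t x, 0 < t -> IZR (Z.abs x) <= c * t - x0 -> v t x <= u - delta.
Proof.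
  intros [Hr [p [uh [[Hp0 Hp1] [_ [[Huh1 Huh2] [R [HR [H0 [t0 [Ht0 HR1]]]]]]]]]]].
  destruct (um_nonneg a b Hr) as [Hum [Humup Hup]].
  set (um := u_minus a b) in *. set (up := u_plus a b) in *.
  set (al := p / 2). set (be := (p + um) / 2).
  set (k0 := al * (a + b) * (um - be) * (up - be)).
  assert (Hk0 : 0 < k0) by (unfold k0, al, be; repeat apply Rmult_lt_0_compat; lra).
  assert (Hg : forall y, al <= y <= be -> gfun (a + b) y <= - k0).
  { intros y Hy. rewrite gfun_fact by lra. fold um up.
    assert (k0 <= y * (a + b) * (um - y) * (up - y)) by (unfold k0; apply prod4_le; unfold al, be in *; lra).
    replace (y * (a + b) * (y - um) * (up - y)) with (- (y * (a + b) * (um - y) * (up - y))) by ring. lra. }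
  set (k2 := uh * (a + b) * (uh - um) * (uh - up)).
  assert (Hk2 : 0 < k2) by (unfold k2; repeat apply Rmult_lt_0_compat; lra).
  assert (Hg2 : forall y, uh <= y <= 1 -> gfun (a + b) y <= - k2).
  { intros y Hy. rewrite gfun_fact by lra. fold um up.
    assert (k2 <= y * (a + b) * (y - um) * (y - up)) by (unfold k2; apply prod4_le; lra).
    replace (y * (a + b) * (y - um) * (up - y)) with (- (y * (a + b) * (y - um) * (y - up))) by ring. lra. }
  set (T1 := (1 - uh) / k2).
  assert (HT1 : 0 <= T1) by (unfold T1; apply Rmult_le_pos; [lra|left; apply Rinv_0_lt_compat; lra]).
  set (T := T1 + 1).
  assert (HT : 0 < T) by (unfold T; lra).
  set (kap := Rmin k0 (Rmin ((be - p) / T) ((p - al) / T))).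
  assert (Hkap1 : kap <= k0) by apply Rmin_l.
  assert (Hkap2 : kap * T <= be - p).
  { assert (kap <= (be - p) / T) by (eapply Rle_trans; [apply Rmin_r|apply Rmin_l]).
    apply (Rmult_le_compat_r T) in H; [|lra]. replace ((be - p) / T * T) with (be - p) in H by (field; lra). exact H. }
  assert (Hkap3 : kap * T <= p - al).
  { assert (kap <= (p - al) / T) by (eapply Rle_trans; [apply Rmin_r|apply Rmin_r]).
    apply (Rmult_le_compat_r T) in H; [|lra]. replace ((p - al) / T * T) with (p - al) in H by (field; lra). exact H. }
  assert (Hkap : 0 < kap).
  { unfold kap. apply Rmin_glb_lt; [lra|]. apply Rmin_glb_lt; apply Rdiv_lt_0_compat; unfold al, be; lra. }
  assert (HkT : 0 < kap * T) by (apply Rmult_lt_0_compat; lra).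
  set (eta := kap * T / 4).
  assert (Heta : 0 < eta) by (unfold eta; lra).
  destruct (CCLS a b M t0 ha hb hM ltac:(lra)) as [k [_ Hk]].
  destruct (CCLS a b M T ha hb hM ltac:(lra)) as [k' [Hk'1 Hk']].
  destruct (small_pow (2 ^ k') (eta / 4) ltac:(lra)) as [n1 Hn1].
  set (n' := S n1).
  assert (Hn' : 2 ^ k' * (/2) ^ n' <= eta / 4).
  { unfold n'. simpl. pose proof (pow_le (/2) n1 ltac:(lra)). pose proof (pow2_ge1 k'). nra. }
  set (J := (k' * n' * M + 1)%nat).
  set (A := 2 ^ k).
  destruct (small_pow (INR J * A ^ J) (eta / 4) ltac:(lra)) as [n Hn].
  set (B := Z.of_nat (k * n * M)). set (N' := Z.of_nat (k' * n' * M)).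
  assert (HN'1 : (1 <= N')%Z) by (unfold N', n'; assert (1 <= k' * S n1 * M)%nat by nia; lia).
  assert (HB0 : (0 <= B)%Z) by (unfold B; lia).
  assert (Hu : p + 2 * eta <= be) by (unfold eta; lra).
  exists (p + 2 * eta), (IZR (B + N')), (T / (INR J * t0 + T) + 1), (eta / 4), (/ (INR J * t0 + T)).
  assert (HTc : 0 < INR J * t0 + T) by (pose proof (pos_INR J); nra).
  split; [lra|]. split; [apply IZR_lt; lia|]. split.
  { assert (0 < T / (INR J * t0 + T)) by (apply Rdiv_lt_0_compat; lra). lra. }
  split; [lra|]. split; [apply Rinv_0_lt_compat; lra|]. split; [right; unfold be in Hu; lra|].
  intros v Hv Hinit t x Ht Hx.
  assert (Hdesc := descent a b M uh k2 ha hb hM ltac:(lra) Hk2 Hg2 v Hv).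
  fold T1 in Hdesc.
  assert (Hgen := spread_generic (fun t x => - v t x) (- p) eta t0 T kap A ((/2) ^ n)
                   (2 ^ k' * (/2) ^ n') B N' J).
  assert (- p - 7 * eta / 4 <= - v t x); [|lra].
  apply Hgen; auto.
  - unfold eta; field.
  - apply pow2_ge1.
  - apply pow_le; lra.
  - lia.
  - unfold J. rewrite Nat2Z.inj_add. unfold N'. simpl. lia.
  - intros s W e Hs HW He Hin y Hy.
    assert (H := XS2r a b M p uh R t0 k ha hb hM Hk HR H0 ltac:(lra) Ht0 HR1 v Hv s W e n
                 ltac:(lra) ltac:(lra) HW ltac:(intros z; apply Hdesc; unfold T in Hs; lra)
                 ltac:(intros z Hz; specialize (Hin z Hz); lra) y Hy).
    fold A in H. lra.
  - intros s W l Hs Hl Hin t' y Ht' Hy.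
    assert (H := FALLr a b M t0 k 0 al be hM Hk ltac:(lra) ltac:(lra) ltac:(unfold al; lra) ltac:(unfold be; lra)
             ltac:(intros z Hz; specialize (Hg z Hz); lra) v Hv s W (- l) ltac:(lra)
             ltac:(unfold al, eta in *; lra) ltac:(unfold eta in *; lra)
             ltac:(intros z Hz; specialize (Hin z Hz); lra) n t' y Ht' Hy).
    fold A in H. lra.
  - intros s W l Hs Hl Hin t' y Ht' Hy.
    assert (H := FALLr a b M T k' kap al be hM Hk' ltac:(lra) ltac:(lra) ltac:(unfold al; lra) ltac:(unfold be; lra)
             ltac:(intros z Hz; specialize (Hg z Hz); lra) v Hv s W (- l) Hs
             ltac:(lra) ltac:(lra)
             ltac:(intros z Hz; specialize (Hin z Hz); lra) n' t' y Ht' Hy).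
    lra.
  - intros y Hy. specialize (Hinit y Hy). lra.
Qed.


Theorem theorem2p1 (a b : R) (M : nat) (ha : 0 < a) (hb : 0 < b) (hM : (1 <= M)%nat) :
  (expansion a b M ->
     exists u L x0 delta c,
       0 < u /\ 0 < L /\ 0 < x0 /\ 0 < delta /\ 0 < c /\
       u_minus a b < u < u_plus a b /\
       forall v, mf_solution a b M v ->
         (forall x, IZR (Z.abs x) <= L -> u <= v 0 x) ->
         forall t x, 0 < t -> IZR (Z.abs x) <= c * t - x0 -> u + delta <= v t x)
  /\
  (retreat a b M ->
     exists u L x0 delta c,
       0 < u /\ 0 < L /\ 0 < x0 /\ 0 < delta /\ 0 < c /\
       (a + b < 4 \/ u < u_minus a b) /\
       forall v, mf_solution a b M v ->
         (forall x, IZR (Z.abs x) <= L -> v 0 x <= u) ->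
         forall t x, 0 < t -> IZR (Z.abs x) <= c * t - x0 -> v t x <= u - delta).
Proof.
  split.
  - apply part1; auto.
  - intros [H|H].
    + apply part2A; auto.
    + apply part2B; auto.
Qed.
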